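(* The property $\mathrm{Split}(B_\Lambda,B_\Lambda)$ is hereditary: if a set of reals $X$ satisfies $\mathrm{Split}(B_\Lambda,B_\Lambda)$ and $Y\subseteq X$ is infinite, then $Y$ satisfies $\mathrm{Split}(B_\Lambda,B_\Lambda)$.
   Context: A set of reals is an infinite topological space homeomorphic to a subset of $\mathbb R$. A cover of a space $X$ is a family $\mathcal U$ of subsets of $X$ with $\bigcup\mathcal U=X$ such that $X\not\subseteq U$ for all $U\in\mathcal U$; it is a large cover if every $x\in X$ lies in infinitely many members of $\mathcal U$. $B_\Lambda$ is the collection of countable large covers of the space by Borel sets. A space satisfies $\mathrm{Split}(B_\Lambda,B_\Lambda)$ if every $\mathcal U\in B_\Lambda$ can be partitioned into two disjoint subfamilies each containing a subfamily belonging to $B_\Lambda$ (equivalently, each of which is itself a large cover). *)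

(* Defs.v *)
From mathcomp Require Import all_boot all_order all_algebra.
From mathcomp Require Import all_classical all_reals all_analysis.
Set Implicit Arguments. Unset Strict Implicit. Unset Printing Implicit Defensive.
Import numFieldTopology.Exports.
Local Open Scope classical_set_scope.

Section Defs.
Variable R : realType.

Definition Borel (A : set R) : Prop := <<s [set O : set R | open O] >> A.

Definition Borel_in (X A : set R) : Prop := exists B, Borel B /\ A = B `&` X.

Definition is_cover (X : set R) (U : set (set R)) : Prop :=
  (forall A, U A -> A `<=` X) /\ \bigcup_(A in U) A = X /\
  (forall A, U A -> ~ (X `<=` A)).

Definition large_cover (X : set R) (U : set (set R)) : Prop :=
  is_cover X U /\ forall x, X x -> infinite_set [set A | U A /\ A x].

Definition B_Lambda (X : set R) (U : set (set R)) : Prop :=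
  countable U /\ (forall A, U A -> Borel_in X A) /\ large_cover X U.

Definition Split_BL (X : set R) : Prop :=
  forall U, B_Lambda X U ->
    exists V W : set (set R),
      V `|` W = U /\ V `&` W = set0 /\
      (exists V', V' `<=` V /\ B_Lambda X V') /\
      (exists W', W' `<=` W /\ B_Lambda X W').

End Defs.

(* Main.v *)
Require Import Defs.
From mathcomp Require Import all_boot all_order all_algebra.
From mathcomp Require Import all_classical all_reals all_analysis.
Local Open Scope classical_set_scope.

Lemma nat_finite_bounded (S : set nat) : finite_set S ->
  exists N, forall n, S n -> (n < N)%N.
Proof.
move=> /finite_fsetP[Xs ->]; exists (\max_(i <- finmap.enum_fset Xs) i).+1 => n /= nX.
rewrite ltnS; apply: (@leq_bigmax_seq nat _ xpredT id n) => //.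
Qed.

Lemma inj_infinite T U (f : T -> U) (S : set T) :
  {in S &, injective f} -> infinite_set S -> infinite_set (f @` S).
Proof. by move=> inj inf; rewrite (eq_finite_set (inj_card_eq inj)). Qed.

Lemma inj_large T (g : T -> nat) (S : set T) : {in S &, injective g} ->
  infinite_set S -> forall N, exists2 D, S D & (N <= g D)%N.
Proof.
move=> inj inf N.
have fin : finite_set [set D | S D /\ (g D < N)%N].
  apply: contrapT => inf2.
  apply: (@inj_infinite _ _ g _ _ inf2).
    move=> a b; rewrite !in_setE => -[Sa _] [Sb _]; by apply: inj; rewrite ?in_setE.
  apply: (sub_finite_set _ (finite_II N)).
  by move=> _ [D [_ ?] <-].
have /infinite_setN0[D [SD /= nD]] := infinite_setD inf fin.
exists D => //; rewrite leqNgt; apply/negP => lt; by apply: nD; split.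
Qed.

Lemma BorelU (R : realType) (A B : set R) : Borel A -> Borel B -> Borel (A `|` B).
Proof.
move=> bA bB.
rewrite (_ : A `|` B = \bigcup_n (if n is 0 then A else B)%N).
  by apply: sigma_algebra_bigcup; case.
apply/seteqP; split=> [x [Ax|Bx]|x [[|n] _ ?]]; [by exists 0%N|by exists 1%N|by left|by right].
Qed.

Lemma BorelC (R : realType) (A : set R) : Borel A -> Borel (~` A).
Proof. by move=> bA; rewrite -setTD; apply: sigma_algebraCD. Qed.

Lemma Borel0 (R : realType) : Borel (@set0 R).
Proof. exact: sigma_algebra0. Qed.

Set Implicit Arguments.
Section Main.
Variables (R : realType) (X Y : set R).
Hypothesis YX : Y `<=` X.
Hypothesis infY : infinite_set Y.
Variable U : set (set R).
Hypothesis HU : B_Lambda Y U.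
Variable g : set R -> nat.
Hypothesis ginj : {in U &, injective g}.

Definition Bf (A : set R) : set R :=
  match pselect (exists B, Borel B /\ A = B `&` Y) with
  | left H => projT1 (cid H) | right _ => set0 end.

Lemma Borel_Bf A : Borel (Bf A).
Proof. rewrite /Bf; case: pselect => [H|_]; [exact: (projT2 (cid H)).1|exact: Borel0]. Qed.

Lemma BfE A : U A -> A = Bf A `&` Y.
Proof.
move=> UA; case: HU => _ [bU _]; have [B [bB AE]] := bU A UA.
rewrite /Bf; case: pselect => [H|nH]; first exact: (projT2 (cid H)).2.
by exfalso; apply: nH; exists B.
Qed.

Definition F n : set R :=
  match pselect (exists C, U C /\ g C = n) with
  | left H => Bf (projT1 (cid H)) | right _ => set0 end.

Lemma Borel_F n : Borel (F n).
Proof. rewrite /F; case: pselect => [H|_]; [exact: Borel_Bf|exact: Borel0]. Qed.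

Lemma F_g C : U C -> F (g C) = Bf C.
Proof.
move=> UC; rewrite /F; case: pselect => [H|nH]; last by exfalso; apply: nH; exists C.
case: (cid H) => D [UD gD] /=; congr Bf; apply: ginj; rewrite ?in_setE //.
Qed.

Lemma F_inv n x : F n x -> exists C, [/\ U C, g C = n & Bf C x].
Proof.
rewrite /F; case: pselect => [H|//]; case: (cid H) => D [UD gD] /= ?.
by exists D.
Qed.

Definition Tl (A : set R) : set R :=
  \bigcup_n (if (g A < n)%N then F n else set0).

Lemma Borel_Tl A : Borel (Tl A).
Proof. by apply: sigma_algebra_bigcup => n; case: ifP => _; [exact: Borel_F|exact: Borel0]. Qed.

Definition A' (C : set R) : set R := (Bf C `|` ~` Tl C) `&` X.

Lemma inj_sub (S : set (set R)) : S `<=` U -> {in S &, injective g}.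
Proof. by move=> SU a b; rewrite !in_setE => Sa Sb; apply: ginj; rewrite in_setE; apply: SU. Qed.

Lemma Y_far y N : Y y -> exists2 D, U D /\ D y & (N <= g D)%N.
Proof.
move=> Yy; case: HU => _ [_ [_ infU]].
have [D [UD Dy] ND] := @inj_large _ g _ (@inj_sub [set A | U A /\ A y] (fun _ => @proj1 _ _)) (infU y Yy) N.
by exists D.
Qed.

Lemma T_Y C y : U C -> Y y -> Tl C y.
Proof.
move=> UC Yy; have [D [UD Dy] lt] := Y_far (g C).+1 Yy.
exists (g D) => //=; rewrite lt F_g //.
by move: Dy; rewrite {1}(BfE UD) => -[].
Qed.

Lemma A'Y C : U C -> A' C `&` Y = C.
Proof.
move=> UC; apply/seteqP; split=> [x [[[Bx|nT] _] Yx]|x Cx].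
- by rewrite (BfE UC).
- by exfalso; apply: nT; exact: T_Y.
- case: HU => _ [_ [[subU _] _]]; have Yx := subU C UC x Cx.
  split=> //; split; last exact: YX.
  by left; move: Cx; rewrite {1}(BfE UC) => -[].
Qed.

Lemma A'inj : {in U &, injective A'}.
Proof.
move=> a b; rewrite !in_setE => Ua Ub e.
by rewrite -(A'Y Ua) -(A'Y Ub) e.
Qed.

Lemma infU : infinite_set U.
Proof.
case: HU => _ [_ [_ iU]]; have [y Yy] := infinite_setN0 infY.
by apply: sub_infinite_set (iU y Yy) => A [].
Qed.

Lemma U'large x : X x -> infinite_set [set C | U C /\ A' C x].
Proof.
move=> Xx.
have [finQ|infQ] := pselect (finite_set [set C | U C /\ Bf C x]); last first.
  apply: sub_infinite_set infQ => C [UC Bx]; split=> //; split=> //; by left.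
have [N HN] := @nat_finite_bounded _ (finite_image g finQ).
have finB : finite_set [set D | U D /\ (g D < N)%N].
  apply: contrapT => inf2.
  apply: (@inj_infinite _ _ g _ _ inf2).
    by apply: inj_sub => ? [].
  apply: (sub_finite_set _ (finite_II N)).
  by move=> _ [D [_ ?] <-].
apply: sub_infinite_set (infinite_setD infU finB) => C [UC /= nC].
split=> //; split=> //; right => -[n _] /=; case: ifP => // lt /F_inv[D [UD gD Dx]].
apply: nC; split => //.
have : (g D < N)%N by apply: HN; exists D.
by rewrite gD; apply: ltn_trans.
Qed.

Definition U' := A' @` U.

Lemma U'BL : B_Lambda X U'.
Proof.
case: HU => cU [bU [[subU [cupU notU]] iU]].
have sub' : forall A, U' A -> A `<=` X by move=> _ [C _ <-] x [].
have lg : forall x, X x -> infinite_set [set A | U' A /\ A x].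
  move=> x Xx.
  have I : {in [set C | U C /\ A' C x] &, injective A'}.
    by move=> a b; rewrite !in_setE => -[Ua _] [Ub _]; apply: A'inj; rewrite in_setE.
  apply: sub_infinite_set (@inj_infinite _ _ A' _ I (U'large Xx)).
  by move=> _ [C [UC Cx] <-]; split=> //; exists C.
split; first exact: card_le_trans (card_image_le A' U) cU.
split.
  move=> _ [C UC <-]; exists (Bf C `|` ~` Tl C); split=> //.
  by apply: BorelU; [exact: Borel_Bf|apply: BorelC; exact: Borel_Tl].
split=> //; split=> //; split.
  apply/seteqP; split=> [x [A UA Ax]|x Xx]; first exact: sub' Ax.
  by have [A [UA Ax]] := infinite_setN0 (lg x Xx); exists A.
move=> _ [C UC <-] XA; apply: (notU C UC).
by rewrite -(A'Y UC) => y Yy; split=> //; apply: XA; apply: YX.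
Qed.

Lemma pullback V' : V' `<=` U' -> B_Lambda X V' ->
  B_Lambda Y ((fun A => A `&` Y) @` V').
Proof.
move=> VU [cV [_ [[subV [cupV notV]] iV]]].
case: HU => cU [bU [[subU [cupU notU]] iU]].
have key : forall A, V' A -> exists2 C, U C & A = A' C.
  by move=> A /VU[C UC <-]; exists C.
have injY : {in V' &, injective (fun A => A `&` Y)}.
  move=> a b; rewrite !in_setE => /key[c Uc ->] /key[d Ud ->].
  by rewrite (A'Y Uc) (A'Y Ud) => ->.
split; first exact: card_le_trans (card_image_le _ _) cV.
split.
  by move=> _ [A /key[C UC ->] <-]; rewrite (A'Y UC); apply: bU.
split; last first.
  move=> y Yy.
  have I : {in [set B | V' B /\ B y] &, injective (fun B => setI B Y)}.
    by move=> a b; rewrite !in_setE => -[Va _] [Vb _]; apply: injY; rewrite in_setE.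
  apply: sub_infinite_set (@inj_infinite _ _ _ _ I (iV y (YX Yy))).
  move=> _ [A [VA Ay] <-]; split; first by exists A.
  by split.
split; first by move=> _ [A _ <-] y [].
split.
  apply/seteqP; split=> [y [_ [A _ <-] [_ Yy]]//|y Yy].
  have : (\bigcup_(A in V') A) y by rewrite cupV; apply: YX.
  by case=> A VA Ay; exists (A `&` Y); [exists A|split].
by move=> _ [A /key[C UC ->] <-]; rewrite (A'Y UC); apply: notU.
Qed.

Lemma split_Y : Split_BL X -> exists V W : set (set R),
      V `|` W = U /\ V `&` W = set0 /\
      (exists V', V' `<=` V /\ B_Lambda Y V') /\
      (exists W', W' `<=` W /\ B_Lambda Y W').
Proof.
move=> /(_ U' U'BL)[V [W [VW [VWi [[V' [VV' BV']] [W' [WW' BW']]]]]]].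
exists [set C | U C /\ V (A' C)], [set C | U C /\ W (A' C)].
have sub1 : forall Z, Z `<=` U' -> forall A, Z A -> exists2 C, U C & A = A' C.
  by move=> Z ZU A /ZU[C UC <-]; exists C.
split.
  apply/seteqP; split=> [C [[]|[]]//|C UC].
  have : (V `|` W) (A' C) by rewrite VW; exists C.
  by case=> ?; [left|right].
split.
  apply/seteqP; split=> [C [[_ vC] [_ wC]]|//].
  by have : (V `&` W) (A' C) by [split]; rewrite VWi.
have VU : V `<=` U' by rewrite -VW => ? ?; left.
have WU : W `<=` U' by rewrite -VW => ? ?; right.
split.
  exists ((fun A => A `&` Y) @` V'); split; last first.
    by apply: pullback => //; apply: subset_trans VU.
  move=> _ [A VA <-]; have [C UC AE] := sub1 _ (subset_trans VV' VU) A VA.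
  by rewrite AE (A'Y UC); split=> //; rewrite -AE; apply: VV'.
exists ((fun A => A `&` Y) @` W'); split; last first.
  by apply: pullback => //; apply: subset_trans WU.
move=> _ [A WA <-]; have [C UC AE] := sub1 _ (subset_trans WW' WU) A WA.
by rewrite AE (A'Y UC); split=> //; rewrite -AE; apply: WW'.
Qed.

End Main.

Theorem theorem7p4 (R : realType) (X Y : set R) :
  infinite_set X -> Split_BL X -> Y `<=` X -> infinite_set Y -> Split_BL Y.
Proof.
move=> _ sX YX infY U HU.
have [g ginj] : exists g : set R -> nat, {in U &, injective g}.
  by apply/countable_injP; case: HU.
exact: (split_Y YX infY HU ginj sX).
Qed.
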